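(* Let $T\in\mathcal B(\mathcal H)$. The function $\Psi_T^{-1}(z)=\|(T-z)^{-1}\|$ is semiconvex on the open set $\mathbb C\setminus\sigma(T)$ with bound function $C(z)=2\Psi_T(z)^{-3}$. That is, for every compact convex set $B\subset\mathbb C\setminus\sigma(T)$, setting $C'=\max_{z\in B}2\Psi_T(z)^{-3}$, one has $$2\Psi_T^{-1}(\mu)-\Psi_T^{-1}(\mu+\eta)-\Psi_T^{-1}(\mu-\eta)\le C'|\eta|^2$$ for all $\mu,\eta\in\mathbb C$ with $[\mu-\eta,\mu+\eta]\subset B$.
   Context: $\mathcal H$ is a complex Hilbert space. $\Psi_T(z)=\|(T-z)^{-1}\|^{-1}$ for $z\notin\sigma(T)$. Definition: for $A\subset\mathbb R^n$ and continuous $u:A\to\mathbb R$, $u$ is semiconvex with constant $C\ge0$ if $2u(\mu)-u(\mu+\eta)-u(\mu-\eta)\le C|\eta|^2$ whenever the segment $[\mu-\eta,\mu+\eta]\subset A$; for an open set $A$ and positive continuous $C:A\to\mathbb R$, $u$ is semiconvex with bound function $C(x)$ if for every compact convex $B\subset A$ the restriction $u|_B$ is semiconvex with constant $\max_{x\in B}C(x)$. Here $\mathbb C$ is identified with $\mathbb R^2$. *)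

(* Defs.v *)
From Stdlib Require Import Reals Lra Classical ClassicalEpsilon.
Open Scope R_scope.

Definition CC : Type := (R * R)%type.
Definition Cre (z : CC) : R := fst z.
Definition Cim (z : CC) : R := snd z.
Definition C0 : CC := (0, 0).
Definition C1 : CC := (1, 0).
Definition Cadd (a b : CC) : CC := (fst a + fst b, snd a + snd b).
Definition Copp (a : CC) : CC := (- fst a, - snd a).
Definition Csub (a b : CC) : CC := Cadd a (Copp b).
Definition Cmul (a b : CC) : CC :=
  (fst a * fst b - snd a * snd b, fst a * snd b + snd a * fst b).
Definition Cconj (a : CC) : CC := (fst a, - snd a).
Definition Rscal (t : R) (a : CC) : CC := (t * fst a, t * snd a).
Definition Cabs (a : CC) : R := sqrt (fst a ^ 2 + snd a ^ 2).

Record HilbertSpace : Type := {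
  hcar :> Type;
  hzero : hcar;
  hadd : hcar -> hcar -> hcar;
  hopp : hcar -> hcar;
  hscal : CC -> hcar -> hcar;
  hinner : hcar -> hcar -> CC;
  hadd_assoc : forall x y z, hadd x (hadd y z) = hadd (hadd x y) z;
  hadd_comm : forall x y, hadd x y = hadd y x;
  hadd_zero : forall x, hadd hzero x = x;
  hadd_opp : forall x, hadd (hopp x) x = hzero;
  hscal_one : forall x, hscal C1 x = x;
  hscal_assoc : forall a b x, hscal a (hscal b x) = hscal (Cmul a b) x;
  hscal_distr_vec : forall a x y, hscal a (hadd x y) = hadd (hscal a x) (hscal a y);
  hscal_distr_sc : forall a b x, hscal (Cadd a b) x = hadd (hscal a x) (hscal b x);
  hinner_conj : forall x y, hinner x y = Cconj (hinner y x);
  hinner_add : forall x y z, hinner (hadd x y) z = Cadd (hinner x z) (hinner y z);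
  hinner_scal : forall a x y, hinner (hscal a x) y = Cmul a (hinner x y);
  hinner_pos : forall x, 0 <= fst (hinner x x);
  hinner_def : forall x, hinner x x = C0 -> x = hzero;
  hcomplete : forall u : nat -> hcar,
    (forall eps, 0 < eps -> exists N, forall m n, (N <= m)%nat -> (N <= n)%nat ->
       sqrt (fst (hinner (hadd (u m) (hopp (u n))) (hadd (u m) (hopp (u n))))) < eps) ->
    exists l, forall eps, 0 < eps -> exists N, forall n, (N <= n)%nat ->
       sqrt (fst (hinner (hadd (u n) (hopp l)) (hadd (u n) (hopp l)))) < eps
}.

Arguments hzero {_}. Arguments hadd {_}. Arguments hopp {_}.
Arguments hscal {_}. Arguments hinner {_}.

Definition hnorm {H : HilbertSpace} (x : H) : R := sqrt (fst (hinner x x)).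

Definition is_linear {H : HilbertSpace} (T : H -> H) : Prop :=
  (forall x y, T (hadd x y) = hadd (T x) (T y)) /\
  (forall a x, T (hscal a x) = hscal a (T x)).

Definition is_bounded_op {H : HilbertSpace} (T : H -> H) : Prop :=
  is_linear T /\ exists M, forall x, hnorm (T x) <= M * hnorm x.

(* operator norm: ||T|| = sup { ||T x|| : ||x|| <= 1 } (0 if no sup exists,
   which never happens for bounded T) *)
Definition opnorm {H : HilbertSpace} (T : H -> H) : R :=
  match excluded_middle_informative
          (exists r, is_lub (fun y => exists x, hnorm x <= 1 /\ y = hnorm (T x)) r) with
  | left h => proj1_sig (constructive_indefinite_description _ h)
  | right _ => 0
  end.

Definition shift_op {H : HilbertSpace} (T : H -> H) (z : CC) : H -> H :=
  fun x => hadd (T x) (hopp (hscal z x)).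

Definition is_inverse_op {H : HilbertSpace} (A S : H -> H) : Prop :=
  is_bounded_op S /\ (forall x, S (A x) = x) /\ (forall x, A (S x) = x).

Definition invertible_op {H : HilbertSpace} (A : H -> H) : Prop :=
  exists S, is_inverse_op A S.

Definition spectrum {H : HilbertSpace} (T : H -> H) (z : CC) : Prop :=
  ~ invertible_op (shift_op T z).

Definition resolvent_set {H : HilbertSpace} (T : H -> H) (z : CC) : Prop :=
  ~ spectrum T z.

(* (T - z)^{-1}  (arbitrary value off the resolvent set) *)
Definition resolvent {H : HilbertSpace} (T : H -> H) (z : CC) : H -> H :=
  match excluded_middle_informative (invertible_op (shift_op T z)) with
  | left h => proj1_sig (constructive_indefinite_description _ h)
  | right _ => fun _ => hzero
  end.

Definition PsiT {H : HilbertSpace} (T : H -> H) (z : CC) : R :=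
  / opnorm (resolvent T z).
Definition PsiT_inv {H : HilbertSpace} (T : H -> H) (z : CC) : R :=
  opnorm (resolvent T z).

Definition open_set (A : CC -> Prop) : Prop :=
  forall z, A z -> exists r, 0 < r /\ forall w, Cabs (Csub w z) < r -> A w.

Definition compact_set (B : CC -> Prop) : Prop :=
  forall (I : Type) (U : I -> CC -> Prop),
    (forall i, open_set (U i)) ->
    (forall z, B z -> exists i, U i z) ->
    exists l : list I, forall z, B z -> exists i, List.In i l /\ U i z.

Definition convex_set (B : CC -> Prop) : Prop :=
  forall x y t, B x -> B y -> 0 <= t <= 1 ->
    B (Cadd (Rscal (1 - t) x) (Rscal t y)).

Definition segment_in (a b : CC) (A : CC -> Prop) : Prop :=
  forall t, 0 <= t <= 1 -> A (Cadd (Rscal (1 - t) a) (Rscal t b)).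

Definition semiconvex_const (A : CC -> Prop) (u : CC -> R) (c : R) : Prop :=
  forall mu eta, segment_in (Csub mu eta) (Cadd mu eta) A ->
    2 * u mu - u (Cadd mu eta) - u (Csub mu eta) <= c * (Cabs eta) ^ 2.

Definition is_max_on (f : CC -> R) (B : CC -> Prop) (m : R) : Prop :=
  (exists z0, B z0 /\ f z0 = m) /\ (forall z, B z -> f z <= m).

Definition semiconvex_bound (A : CC -> Prop) (u : CC -> R) (C : CC -> R) : Prop :=
  forall B : CC -> Prop,
    compact_set B -> convex_set B -> (forall z, B z -> A z) ->
    forall c, is_max_on C B c -> semiconvex_const B u c.

(* Main.v *)
Require Import Defs.
From Stdlib Require Import Reals Lra Classical ClassicalEpsilon.
Open Scope R_scope.

Lemma hadd_0r {H : HilbertSpace} (x : H) : hadd x hzero = x.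
Proof. rewrite hadd_comm; apply hadd_zero. Qed.

Lemma hadd_oppr {H : HilbertSpace} (x : H) : hadd x (hopp x) = hzero.
Proof. rewrite hadd_comm; apply hadd_opp. Qed.

Lemma hcancel {H : HilbertSpace} (a x y : H) : hadd a x = hadd a y -> x = y.
Proof.
  intro E. rewrite <- (hadd_zero H x), <- (hadd_zero H y), <- (hadd_opp H a),
    <- !hadd_assoc, E; reflexivity.
Qed.

Lemma hscal_C0 {H : HilbertSpace} (x : H) : hscal C0 x = hzero.
Proof.
  apply (hcancel (hscal C0 x)). rewrite hadd_0r, <- hscal_distr_sc.
  f_equal. unfold Cadd, C0; simpl; f_equal; ring.
Qed.

Lemma hopp_scal {H : HilbertSpace} (x : H) : hopp x = hscal (-1, 0) x.
Proof.
  apply (hcancel x). rewrite hadd_oppr. rewrite <- (hscal_one H x) at 1.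
  rewrite <- hscal_distr_sc. rewrite <- (hscal_C0 x). f_equal.
  unfold Cadd, C0, C1; simpl; f_equal; ring.
Qed.

Lemma hscal_sum {H : HilbertSpace} a b (x : H) :
  hadd (hscal a x) (hscal b x) = hscal (Cadd a b) x.
Proof. now rewrite hscal_distr_sc. Qed.

Lemma lin_zero {H : HilbertSpace} (S : H -> H) : is_linear S -> S hzero = hzero.
Proof.
  intros [Ha _]. apply (hcancel (S hzero)). rewrite hadd_0r, <- Ha, hadd_zero; auto.
Qed.

Lemma hadd_swap {H : HilbertSpace} (a b c d : H) :
  hadd (hadd a b) (hadd c d) = hadd (hadd a c) (hadd b d).
Proof.
  rewrite <- !hadd_assoc. f_equal. rewrite !hadd_assoc. f_equal. apply hadd_comm.
Qed.

Definition ip {H : HilbertSpace} (x y : H) : R := fst (hinner x y).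

Lemma hinner_0l {H : HilbertSpace} (y : H) : hinner hzero y = C0.
Proof.
  rewrite <- (hscal_C0 (hzero : H)), hinner_scal. unfold Cmul, C0; simpl; f_equal; ring.
Qed.

Lemma ip_sym {H : HilbertSpace} (x y : H) : ip x y = ip y x.
Proof. unfold ip. rewrite hinner_conj. reflexivity. Qed.

Lemma ip_addl {H : HilbertSpace} (x y z : H) : ip (hadd x y) z = ip x z + ip y z.
Proof. unfold ip. rewrite hinner_add. reflexivity. Qed.

Lemma ip_addr {H : HilbertSpace} (x y z : H) : ip z (hadd x y) = ip z x + ip z y.
Proof. rewrite !(ip_sym z). apply ip_addl. Qed.

Lemma ip_scall {H : HilbertSpace} t (x y : H) : ip (hscal (t, 0) x) y = t * ip x y.
Proof. unfold ip. rewrite hinner_scal. unfold Cmul; simpl; ring. Qed.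

Lemma ip_scalr {H : HilbertSpace} t (x y : H) : ip y (hscal (t, 0) x) = t * ip y x.
Proof. rewrite !(ip_sym y). apply ip_scall. Qed.

Lemma hinner_self_im {H : HilbertSpace} (x : H) : snd (hinner x x) = 0.
Proof.
  pose proof (hinner_conj H x x) as E. destruct (hinner x x) as [a b].
  unfold Cconj in E; simpl in *. injection E; intros; lra.
Qed.

Lemma ip_pos {H : HilbertSpace} (x : H) : 0 <= ip x x.
Proof. apply hinner_pos. Qed.

Lemma ip_scal2 {H : HilbertSpace} a (x : H) :
  ip (hscal a x) (hscal a x) = (fst a ^ 2 + snd a ^ 2) * ip x x.
Proof.
  unfold ip. rewrite hinner_scal, hinner_conj, hinner_scal.
  pose proof (hinner_self_im x) as E.
  destruct (hinner x x) as [q1 q2]; destruct a as [a1 a2]; simpl in *.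
  subst q2. unfold Cmul, Cconj; simpl. ring.
Qed.

Definition nrm {H : HilbertSpace} (x : H) := hnorm x.

Lemma hnorm_ge0 {H : HilbertSpace} (x : H) : 0 <= hnorm x.
Proof. apply sqrt_pos. Qed.

Lemma hnorm_scal {H : HilbertSpace} a (x : H) : hnorm (hscal a x) = Cabs a * hnorm x.
Proof.
  unfold hnorm, Cabs. change (fst (hinner ?u ?v)) with (ip u v).
  rewrite ip_scal2. apply sqrt_mult; [nra | apply ip_pos].
Qed.

Lemma hnorm_zero {H : HilbertSpace} : hnorm (hzero : H) = 0.
Proof. unfold hnorm. rewrite hinner_0l. simpl. apply sqrt_0. Qed.

Lemma hnorm_eq0 {H : HilbertSpace} (x : H) : hnorm x = 0 -> x = hzero.
Proof.
  unfold hnorm. intro E. apply sqrt_eq_0 in E; [|apply hinner_pos].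
  apply hinner_def. pose proof (hinner_self_im x). destruct (hinner x x); simpl in *.
  subst; reflexivity.
Qed.

Lemma quad_disc A B C : 0 <= C ->
  (forall s t, 0 <= s*s*A + 2*s*t*B + t*t*C) -> B*B <= A*C.
Proof.
  intros HC Hq. destruct (Rle_lt_or_eq_dec 0 C HC) as [Cp|C0'].
  - specialize (Hq C (-B)). nra.
  - subst C. specialize (Hq B (-(A+1)/2)). nra.
Qed.

Lemma cauchy_schwarz {H : HilbertSpace} (x y : H) : ip x y <= hnorm x * hnorm y.
Proof.
  assert (D : ip x y * ip x y <= ip x x * ip y y).
  { apply quad_disc; [apply ip_pos|]. intros s t.
    pose proof (ip_pos (hadd (hscal (s,0) x) (hscal (t,0) y))) as P.
    rewrite !ip_addl, !ip_addr, !ip_scall, !ip_scalr in P.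
    rewrite (ip_sym y x) in P. nra. }
  unfold hnorm. change (fst (hinner ?u ?v)) with (ip u v).
  rewrite <- sqrt_mult by apply ip_pos.
  apply Rle_trans with (Rabs (ip x y)); [apply Rle_abs|].
  rewrite <- sqrt_Rsqr_abs. apply sqrt_le_1_alt. unfold Rsqr. lra.
Qed.

Lemma hnorm_triangle {H : HilbertSpace} (x y : H) :
  hnorm (hadd x y) <= hnorm x + hnorm y.
Proof.
  pose proof (cauchy_schwarz x y) as CS.
  pose proof (hnorm_ge0 x). pose proof (hnorm_ge0 y).
  assert (E : ip (hadd x y) (hadd x y) <= (hnorm x + hnorm y) ^ 2).
  { rewrite !ip_addl, !ip_addr, (ip_sym y x).
    assert (Ex : ip x x = hnorm x ^ 2) by (unfold hnorm; rewrite pow2_sqrt; [reflexivity|apply ip_pos]).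
    assert (Ey : ip y y = hnorm y ^ 2) by (unfold hnorm; rewrite pow2_sqrt; [reflexivity|apply ip_pos]).
    rewrite Ex, Ey. nra. }
  unfold hnorm at 1. change (fst (hinner ?u ?v)) with (ip u v).
  rewrite <- (sqrt_pow2 (hnorm x + hnorm y)) by lra. apply sqrt_le_1_alt; exact E.
Qed.

Definition opE {H : HilbertSpace} (S : H -> H) :=
  fun y => exists x, hnorm x <= 1 /\ y = hnorm (S x).

Lemma opnorm_spec {H : HilbertSpace} (S : H -> H) :
  is_bounded_op S -> is_lub (opE S) (opnorm S).
Proof.
  intros [Hl [M HM]].
  assert (Ex : exists r, is_lub (opE S) r).
  { destruct (completeness (opE S)) as [m Hm].
    - exists (Rabs M). intros y [x [Hx ->]]. specialize (HM x).
      pose proof (hnorm_ge0 x). pose proof (hnorm_ge0 (S x)).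
      destruct (Rle_dec 0 M); [rewrite Rabs_pos_eq by lra | rewrite Rabs_left by lra]; nra.
    - exists (hnorm (S hzero)), hzero. split; [rewrite hnorm_zero; lra | reflexivity].
    - exists m; exact Hm. }
  unfold opnorm. destruct (excluded_middle_informative _) as [h|h].
  - exact (proj2_sig (constructive_indefinite_description _ h)).
  - contradiction.
Qed.

Lemma opnorm_ge0 {H : HilbertSpace} (S : H -> H) : is_bounded_op S -> 0 <= opnorm S.
Proof.
  intros HS. destruct (opnorm_spec S HS) as [U _]. apply U. exists hzero.
  rewrite (lin_zero S (proj1 HS)), hnorm_zero. split; [lra|reflexivity].
Qed.

Lemma opnorm_least {H : HilbertSpace} (S : H -> H) N : is_bounded_op S ->
  (forall x, hnorm x <= 1 -> hnorm (S x) <= N) -> opnorm S <= N.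
Proof.
  intros HS HN. destruct (opnorm_spec S HS) as [_ L]. apply L.
  intros y [x [Hx ->]]. auto.
Qed.

Lemma opnorm_bound {H : HilbertSpace} (S : H -> H) x : is_bounded_op S ->
  hnorm (S x) <= opnorm S * hnorm x.
Proof.
  intros HS. pose proof (opnorm_ge0 S HS). destruct (opnorm_spec S HS) as [U _].
  destruct (Req_dec (hnorm x) 0) as [Z|NZ].
  - apply hnorm_eq0 in Z. subst x. rewrite (lin_zero S (proj1 HS)), hnorm_zero. lra.
  - pose proof (hnorm_ge0 x). set (n := hnorm x) in *.
    assert (Cn : Cabs (/ n, 0) = / n).
    { unfold Cabs; cbn [fst snd]. replace ((/ n) ^ 2 + 0 ^ 2) with ((/ n) ^ 2) by ring.
      apply sqrt_pow2. apply Rlt_le, Rinv_0_lt_compat. lra. }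
    assert (Hx : hnorm (hscal (/ n, 0) x) <= 1).
    { rewrite hnorm_scal, Cn. fold n. rewrite Rinv_l by auto; lra. }
    assert (Hb := U _ (ex_intro _ _ (conj Hx eq_refl))).
    rewrite (proj2 (proj1 HS)), hnorm_scal, Cn in Hb.
    apply Rmult_le_compat_l with (r := n) in Hb; [|lra].
    rewrite <- Rmult_assoc, Rinv_r in Hb by auto. lra.
Qed.

Lemma res_spec {H : HilbertSpace} (T : H -> H) z :
  invertible_op (shift_op T z) -> is_inverse_op (shift_op T z) (resolvent T z).
Proof.
  intro h. unfold resolvent. destruct (excluded_middle_informative _) as [h'|h'].
  - exact (proj2_sig (constructive_indefinite_description _ h')).
  - contradiction.
Qed.

Lemma res_ident {H : HilbertSpace} (T : H -> H) a b y :
  invertible_op (shift_op T a) -> invertible_op (shift_op T b) ->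
  resolvent T a y = hadd (resolvent T b y)
     (hscal (Csub a b) (resolvent T a (resolvent T b y))).
Proof.
  intros Ia Ib. destruct (res_spec T a Ia) as [[[Ladd Lsc] _] [SAa ASa]].
  destruct (res_spec T b Ib) as [_ [SAb ASb]].
  set (w := resolvent T b y).
  assert (Hy : shift_op T b w = y) by apply ASb.
  rewrite <- Hy at 1.
  assert (E : shift_op T b w = hadd (shift_op T a w) (hscal (Csub a b) w)).
  { unfold shift_op. rewrite <- hadd_assoc. f_equal.
    rewrite !hopp_scal, !hscal_assoc, hscal_sum. f_equal.
    destruct a, b; unfold Cmul, Cadd, Csub, Copp; simpl; f_equal; ring. }
  rewrite E, Ladd, Lsc, SAa. reflexivity.
Qed.

Lemma combo {H : HilbertSpace} (u v2 w : H) eta k :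
  hadd u u = hadd (hadd (hadd u (hscal eta (hadd v2 (hscal k w))))
                        (hadd u (hscal (Copp eta) v2)))
                  (hscal (Copp (Cmul eta k)) w).
Proof.
  rewrite hscal_distr_vec, hscal_assoc, hadd_swap.
  rewrite (hadd_comm H (hscal eta v2)).
  rewrite <- (hadd_assoc H (hscal (Cmul eta k) w)), hscal_sum.
  replace (Cadd eta (Copp eta)) with C0 by (unfold Cadd, Copp, C0; simpl; f_equal; ring).
  rewrite hscal_C0, hadd_0r, <- hadd_assoc, hscal_sum.
  replace (Cadd (Cmul eta k) (Copp (Cmul eta k))) with C0
    by (unfold Cadd, Copp, C0; simpl; f_equal; ring).
  rewrite hscal_C0, hadd_0r. reflexivity.
Qed.

Lemma amgm3 a b d k : 0 <= a -> 0 <= b -> 0 <= d ->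
  2 * a ^ 3 <= k -> 2 * b ^ 3 <= k -> 2 * d ^ 3 <= k -> a * b * d <= k / 2.
Proof.
  intros. assert (I : 0 <= (a + b + d) * ((a-b)^2 + (b-d)^2 + (d-a)^2)).
  { apply Rmult_le_pos; [lra|]. pose proof (pow2_ge_0 (a-b)). pose proof (pow2_ge_0 (b-d)). pose proof (pow2_ge_0 (d-a)). lra. }
  assert (E: a^3 + b^3 + d^3 - 3*(a*b*d) = (a + b + d) * ((a-b)^2 + (b-d)^2 + (d-a)^2) / 2) by field.
  set (P := (a + b + d) * ((a-b)^2 + (b-d)^2 + (d-a)^2)) in *.
  set (Q := a*b*d) in *. lra.
Qed.

Lemma cabs_k (mu eta : CC) :
  Cabs (Copp (Cmul eta (Csub (Cadd mu eta) (Csub mu eta)))) = 2 * Cabs eta ^ 2.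
Proof.
  destruct mu as [m1 m2], eta as [e1 e2]. unfold Cabs, Copp, Cmul, Csub, Cadd, Copp.
  cbn [fst snd]. rewrite pow2_sqrt by nra.
  rewrite <- (sqrt_pow2 (2 * (e1 ^ 2 + e2 ^ 2))) by nra. f_equal. ring.
Qed.

Lemma cabs2 : Cabs (2, 0) = 2.
Proof. unfold Cabs; cbn [fst snd]. replace (2 ^ 2 + 0 ^ 2) with (2 ^ 2) by ring. apply sqrt_pow2; lra. Qed.

Lemma inv_bounded {H : HilbertSpace} (T : H -> H) z :
  invertible_op (shift_op T z) -> is_bounded_op (resolvent T z).
Proof. intro h. apply (res_spec T z h). Qed.

Theorem theorem2p9 (H : HilbertSpace) (T : H -> H) (hT : is_bounded_op T) :
  semiconvex_bound (resolvent_set T) (PsiT_inv T)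
    (fun z => 2 * (/ PsiT T z) ^ 3).
Proof.
  intros B _ _ Hsub c [_ Hmax] mu eta Hseg.
  assert (Bn : B (Csub mu eta)).
  { replace (Csub mu eta) with (Cadd (Rscal (1 - 0) (Csub mu eta)) (Rscal 0 (Cadd mu eta))).
    - apply Hseg; lra.
    - destruct mu, eta; cbv [Cadd Rscal Csub Copp fst snd]; f_equal; ring. }
  assert (Bp : B (Cadd mu eta)).
  { replace (Cadd mu eta) with (Cadd (Rscal (1 - 1) (Csub mu eta)) (Rscal 1 (Cadd mu eta))) at 1.
    - apply Hseg; lra.
    - destruct mu, eta; cbv [Cadd Rscal Csub Copp fst snd]; f_equal; ring. }
  assert (Bm : B mu).
  { replace mu with (Cadd (Rscal (1 - /2) (Csub mu eta)) (Rscal (/2) (Cadd mu eta))) at 1.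
    - apply Hseg; lra.
    - destruct mu, eta; cbv [Cadd Rscal Csub Copp fst snd]; f_equal; field. }
  assert (Inv : forall z, B z -> invertible_op (shift_op T z)).
  { intros z Bz. apply NNPP. exact (Hsub z Bz). }
  assert (Mx : forall z, B z -> 2 * PsiT_inv T z ^ 3 <= c).
  { intros z Bz. specialize (Hmax z Bz). unfold PsiT in Hmax. rewrite Rinv_inv in Hmax.
    exact Hmax. }
  pose proof (Mx _ Bm) as M0. pose proof (Mx _ Bp) as Mp. pose proof (Mx _ Bn) as Mn.
  pose proof (Inv _ Bm) as I0. pose proof (Inv _ Bp) as Ip. pose proof (Inv _ Bn) as In.
  unfold PsiT_inv in *.
  set (R0 := resolvent T mu) in *. set (Rp := resolvent T (Cadd mu eta)) in *.
  set (Rn := resolvent T (Csub mu eta)) in *.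
  pose proof (inv_bounded T _ I0) as B0. pose proof (inv_bounded T _ Ip) as BP.
  pose proof (inv_bounded T _ In) as BN.
  fold R0 in B0. fold Rp in BP. fold Rn in BN.
  pose proof (opnorm_ge0 _ B0) as N0p. pose proof (opnorm_ge0 _ BP) as Npp.
  pose proof (opnorm_ge0 _ BN) as Nnp.
  set (N0 := opnorm R0) in *. set (Np := opnorm Rp) in *. set (Nn := opnorm Rn) in *.
  set (e2 := Cabs eta ^ 2).
  assert (e2p : 0 <= e2) by (unfold e2, Cabs; pose proof (sqrt_pos (fst eta ^ 2 + snd eta ^ 2)); nra).
  assert (Key : N0 <= (Np + Nn + 2 * e2 * (Np * Nn * N0)) / 2).
  { apply opnorm_least; [exact B0|]. intros x Hx.
    pose proof (hnorm_ge0 x) as hx.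
    set (u := R0 x).
    assert (Ep : Rp x = hadd u (hscal eta (hadd (Rn u)
                  (hscal (Csub (Cadd mu eta) (Csub mu eta)) (Rp (Rn u)))))).
    { unfold Rp, u, R0, Rn. rewrite (res_ident T (Cadd mu eta) mu x Ip I0).
      f_equal. replace (Csub (Cadd mu eta) mu) with eta
        by (destruct mu, eta; cbv [Cadd Csub Copp fst snd]; f_equal; ring).
      f_equal. apply res_ident; assumption. }
    assert (Em : Rn x = hadd u (hscal (Copp eta) (Rn u))).
    { unfold u, R0, Rn. rewrite (res_ident T (Csub mu eta) mu x In I0).
      f_equal. f_equal.
      destruct mu, eta; cbv [Cadd Csub Copp fst snd]; f_equal; ring. }
    set (w := Rp (Rn u)) in *.
    pose proof (combo u (Rn u) w eta (Csub (Cadd mu eta) (Csub mu eta))) as Cb.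
    rewrite <- Ep, <- Em in Cb.
    assert (Uu : hnorm (hadd u u) = 2 * hnorm u).
    { assert (E2 : hadd u u = hscal (2, 0) u).
      { replace ((2, 0) : CC) with (Cadd Defs.C1 Defs.C1)
          by (cbv [Cadd Defs.C1 fst snd]; f_equal; ring).
        rewrite hscal_distr_sc, hscal_one. reflexivity. }
      rewrite E2, hnorm_scal, cabs2. reflexivity. }
    pose proof (hnorm_triangle (hadd (Rp x) (Rn x))
                  (hscal (Copp (Cmul eta (Csub (Cadd mu eta) (Csub mu eta)))) w)) as T1.
    pose proof (hnorm_triangle (Rp x) (Rn x)) as T2.
    rewrite <- Cb, Uu, hnorm_scal, cabs_k in T1. fold e2 in T1.
    pose proof (opnorm_bound Rp x BP) as Hp. pose proof (opnorm_bound Rn x BN) as Hn.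
    pose proof (opnorm_bound R0 x B0) as H0. fold u N0 Np Nn in Hp, Hn, H0.
    pose proof (opnorm_bound Rp (Rn u) BP) as W1. fold w Np in W1.
    pose proof (opnorm_bound Rn u BN) as W2. fold Nn in W2.
    pose proof (hnorm_ge0 u). pose proof (hnorm_ge0 (Rn u)). pose proof (hnorm_ge0 w).
    assert (Hu : hnorm u <= N0) by nra.
    assert (Hv : hnorm (Rn u) <= Nn * N0) by nra.
    assert (Hw : hnorm w <= Np * (Nn * N0)) by nra.
    assert (Hpx : hnorm (Rp x) <= Np) by nra.
    assert (Hnx : hnorm (Rn x) <= Nn) by nra.
    assert (e2 * hnorm w <= e2 * (Np * Nn * N0)) by nra.
    lra. }
  assert (P3 : Np * Nn * N0 <= c / 2) by (apply amgm3; assumption).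
  assert (e2 * (Np * Nn * N0) <= e2 * (c / 2)) by (apply Rmult_le_compat_l; assumption).
  fold e2. lra.
Qed.
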